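(* Let $Y=\{(x,y)\in\mathbb{R}^2:(x/a)^2+y^2=1\}$ with $1<a\le\sqrt2$. The six vertices of the two inscribed equilateral triangles $\Delta_{(\pm a,0)}$ (those with a vertex at $(a,0)$, resp. $(-a,0)$, of side length $r_1=\frac{4\sqrt3 a}{a^2+3}$) are global minima of $s:Y\to\mathbb{R}$; the six vertices of the two inscribed equilateral triangles $\Delta_{(0,\pm1)}$ (with a vertex at $(0,1)$, resp. $(0,-1)$, of side length $r_2=\frac{4\sqrt3a^2}{3a^2+1}$) are global maxima of $s$; and $s$ has no other local extrema.
   Context: For $1<a\le\sqrt2$, every $p\in Y$ is a vertex of a unique equilateral triangle (Euclidean) inscribed in $Y$; $s(p)$ denotes its side length. Explicitly $\Delta_{(a,0)}$ has vertices $(a,0)$ and $\bigl(-\frac{3a-a^3}{a^2+3},\pm\frac{2\sqrt3a}{a^2+3}\bigr)$, $\Delta_{(-a,0)}$ is its reflection in the $y$-axis, $\Delta_{(0,1)}$ has vertices $(0,1)$ and $\bigl(\pm\frac{2\sqrt3a^2}{3a^2+1},-\frac{3a^2-1}{3a^2+1}\bigr)$, and $\Delta_{(0,-1)}$ is its reflection in the $x$-axis. *)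

(* Defs.v *)
From Stdlib Require Import Reals Lra ClassicalEpsilon.
Open Scope R_scope.

Definition pt := (R * R)%type.

Definition onY (a : R) (p : pt) : Prop :=
  (fst p / a) ^ 2 + (snd p) ^ 2 = 1.

Definition dist (p q : pt) : R :=
  sqrt ((fst p - fst q) ^ 2 + (snd p - snd q) ^ 2).

Definition side_of (a : R) (p : pt) (r : R) : Prop :=
  exists q w : pt, onY a q /\ onY a w /\ 0 < r /\
    dist p q = r /\ dist q w = r /\ dist w p = r.

(* s(p): the side length of the (unique, for 1 < a <= sqrt 2) inscribed
   equilateral triangle with vertex p, chosen by Hilbert's epsilon. *)
Definition s (a : R) (p : pt) : R :=
  epsilon (inhabits 0) (fun r => side_of a p r).

Definition r1 (a : R) : R := 4 * sqrt 3 * a / (a ^ 2 + 3).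
Definition r2 (a : R) : R := 4 * sqrt 3 * a ^ 2 / (3 * a ^ 2 + 1).

(* The six vertices of Delta_(a,0) and Delta_(-a,0). *)
Definition min_vertex (a : R) (p : pt) : Prop :=
  p = (a, 0) \/
  p = (- ((3 * a - a ^ 3) / (a ^ 2 + 3)), 2 * sqrt 3 * a / (a ^ 2 + 3)) \/
  p = (- ((3 * a - a ^ 3) / (a ^ 2 + 3)), - (2 * sqrt 3 * a / (a ^ 2 + 3))) \/
  p = (- a, 0) \/
  p = ((3 * a - a ^ 3) / (a ^ 2 + 3), 2 * sqrt 3 * a / (a ^ 2 + 3)) \/
  p = ((3 * a - a ^ 3) / (a ^ 2 + 3), - (2 * sqrt 3 * a / (a ^ 2 + 3))).

(* The six vertices of Delta_(0,1) and Delta_(0,-1). *)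
Definition max_vertex (a : R) (p : pt) : Prop :=
  p = (0, 1) \/
  p = (2 * sqrt 3 * a ^ 2 / (3 * a ^ 2 + 1), - ((3 * a ^ 2 - 1) / (3 * a ^ 2 + 1))) \/
  p = (- (2 * sqrt 3 * a ^ 2 / (3 * a ^ 2 + 1)), - ((3 * a ^ 2 - 1) / (3 * a ^ 2 + 1))) \/
  p = (0, -1) \/
  p = (2 * sqrt 3 * a ^ 2 / (3 * a ^ 2 + 1), (3 * a ^ 2 - 1) / (3 * a ^ 2 + 1)) \/
  p = (- (2 * sqrt 3 * a ^ 2 / (3 * a ^ 2 + 1)), (3 * a ^ 2 - 1) / (3 * a ^ 2 + 1)).

Definition is_global_min (a : R) (p : pt) : Prop :=
  forall q, onY a q -> s a p <= s a q.
Definition is_global_max (a : R) (p : pt) : Prop :=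
  forall q, onY a q -> s a q <= s a p.
Definition is_local_min (a : R) (p : pt) : Prop :=
  exists eps, 0 < eps /\ forall q, onY a q -> dist p q < eps -> s a p <= s a q.
Definition is_local_max (a : R) (p : pt) : Prop :=
  exists eps, 0 < eps /\ forall q, onY a q -> dist p q < eps -> s a q <= s a p.

(* Main.v *)
Require Import Defs.
From Stdlib Require Import Reals Lra Psatz ClassicalEpsilon.
Open Scope R_scope.

Definition r3 := sqrt 3.
Lemma r3sq : r3 * r3 = 3.
Proof. unfold r3; apply sqrt_sqrt; lra. Qed.
Lemma r3_2 : r3 ^ 2 = 3. Proof. rewrite <- r3sq; ring. Qed.
Lemma r3_3 : r3 ^ 3 = 3 * r3. Proof. rewrite <- r3sq; ring. Qed.
Lemma r3_4 : r3 ^ 4 = 9. Proof. replace (r3^4) with ((r3*r3)*(r3*r3)) by ring; rewrite r3sq; ring. Qed.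
Lemma r3_5 : r3 ^ 5 = 9 * r3. Proof. replace (r3^5) with ((r3*r3)*(r3*r3)*r3) by ring; rewrite r3sq; ring. Qed.
Lemma r3_6 : r3 ^ 6 = 27. Proof. replace (r3^6) with ((r3*r3)*(r3*r3)*(r3*r3)) by ring; rewrite r3sq; ring. Qed.
Lemma r3pos : 0 < r3. Proof. unfold r3; apply sqrt_lt_R0; lra. Qed.

Ltac r3ring := unfold Rdiv; ring_simplify; rewrite ?r3_6, ?r3_5, ?r3_4, ?r3_3, ?r3_2; field.

Definition disc (a0 a1 a2 a3 : R) := a1*a1*a2*a2-4*a0*a2^3-4*a1^3*a3-27*a0*a0*a3*a3+18*a0*a1*a2*a3.
Definition Hc (a0 a1 a2 a3 c s:R) := a0*c^3+a1*c^2*s+a2*c*s^2+a3*s^3.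
Lemma disc_transf a0 a1 a2 a3 c1 s1 c2 s2 :
  let b0 := Hc a0 a1 a2 a3 c1 s1 in
  let b3 := Hc a0 a1 a2 a3 c2 s2 in
  let b1 := 3*a0*c1^2*c2 + a1*(c1^2*s2+2*c1*s1*c2) + a2*(2*c1*s1*s2+s1^2*c2) + 3*a3*s1^2*s2 in
  let b2 := 3*a0*c1*c2^2 + a1*(2*c1*c2*s2+s1*c2^2) + a2*(c1*s2^2+2*s1*c2*s2) + 3*a3*s1*s2^2 in
  disc b0 b1 b2 b3 = (c1*s2-s1*c2)^6 * disc a0 a1 a2 a3.
Proof. intros. unfold b0,b1,b2,b3,disc,Hc. ring. Qed.

Lemma disc00 b1 b2 : disc 0 b1 b2 0 = (b1*b2)^2.
Proof. unfold disc; ring. Qed.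

Lemma two_roots_disc a0 a1 a2 a3 c1 s1 c2 s2 :
  Hc a0 a1 a2 a3 c1 s1 = 0 -> Hc a0 a1 a2 a3 c2 s2 = 0 -> c1*s2-s1*c2 <> 0 ->
  0 <= disc a0 a1 a2 a3.
Proof.
  intros h1 h2 hd.
  pose proof (disc_transf a0 a1 a2 a3 c1 s1 c2 s2) as E. cbv zeta in E.
  rewrite h1, h2, disc00 in E.
  set (d := c1*s2-s1*c2) in *.
  assert (hp : 0 < d^6). { replace (d^6) with ((d^3)^2) by ring. assert (d^3 <> 0) by (apply pow_nonzero; auto). nra. }
  assert (0 <= d^6 * disc a0 a1 a2 a3) by (rewrite <- E; apply pow2_ge_0).
  nra.
Qed.

Section Cubic.
Variable a : R.
Definition Nf (x y c s : R) := x*c + a^2*y*s.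
Definition Qf (c s : R) := c^2 + a^2*s^2.
Definition irx (c s : R) := c/2 + r3/2*s.
Definition iry (c s : R) := -(r3/2)*c + s/2.
Definition Hf x y c s := Nf x y c s * Qf (irx c s) (iry c s) - Nf x y (irx c s) (iry c s) * Qf c s.
Definition hc0 x y := (3/4)*x*a^2 - (1/4)*x + (1/2)*y*r3*a^2.
Definition hc1 x y := (-1/2)*x*r3*a^2 + (3/4)*y*a^4 + (-1/4)*y*a^2.
Definition hc2 x y := (-1/4)*x*a^2 + (3/4)*x + (1/2)*y*r3*a^2.
Definition hc3 x y := (-1/2)*x*r3*a^2 + (-1/4)*y*a^4 + (3/4)*y*a^2.
Lemma Hf_coef x y c s : Hf x y c s = Hc (hc0 x y) (hc1 x y) (hc2 x y) (hc3 x y) c s.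
Proof. unfold Hf, Hc, Nf, Qf, irx, iry, hc0, hc1, hc2, hc3. r3ring. Qed.

Lemma disc_expl x y : disc (hc0 x y) (hc1 x y) (hc2 x y) (hc3 x y) =
  ((-1029/64)*a^8 + (245/16)*a^6 + (-63/32)*a^4 + (-27/16)*a^2 + (27/64)) * x^4
  + ((-117/32)*a^12 + (-147/8)*a^10 + (577/16)*a^8 + (-147/8)*a^6 + (-117/32)*a^4) * x^2*y^2
  + ((27/64)*a^16 + (-27/16)*a^14 + (-63/32)*a^12 + (245/16)*a^10 + (-1029/64)*a^8) * y^4.
Proof. unfold disc, hc0, hc1, hc2, hc3. r3ring. Qed.
End Cubic.

Lemma prod_np u v : 0 <= u -> v <= 0 -> u*v <= 0.
Proof. intros; nra. Qed.

Lemma poly_c1 t : 1 < t -> t <= 2 -> (-1029/64)*t^4 + (245/16)*t^3 + (-63/32)*t^2 + (-27/16)*t + (27/64) < 0.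
Proof.
  intros h1 h2. assert (h3: 1 <= t^3) by (replace (t^3) with (t*t*t) by ring; assert (1 <= t*t) by nra; nra).
  assert (t^3*(980-1029*t) <= 0) by (apply prod_np; lra).
  assert (t^4 = t^3*t) by ring. assert (t^2 = t*t) by ring. nra.
Qed.
Lemma poly_q t : 1 < t -> t <= 2 -> 44 <= 27*t^3 - 54*t^2 - 234*t + 512.
Proof.
  intros h1 h2. assert (E: 27*t^3 - 54*t^2 - 234*t + 468 = (2-t)*(234-27*t^2)) by ring.
  assert (t^2 <= 4) by (replace (t^2) with (t*t) by ring; nra).
  assert (0 <= (2-t)*(234-27*t^2)) by (apply Rmult_le_pos; lra). lra.
Qed.
Lemma poly_g t : 1 < t -> t <= 2 -> 27*t^4 - 108*t^3 - 126*t^2 + 980*t - 1029 <= -5.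
Proof.
  intros h1 h2. pose proof (poly_q t h1 h2).
  assert (E: 27*t^4 - 108*t^3 - 126*t^2 + 980*t - 1029 = -5 - (2-t)*(27*t^3 - 54*t^2 - 234*t + 512)) by ring.
  assert (0 <= (2-t)*(27*t^3 - 54*t^2 - 234*t + 512)) by (apply Rmult_le_pos; lra). lra.
Qed.
Lemma poly_c3 t : 1 < t -> t <= 2 -> (27/64)*t^8 + (-27/16)*t^7 + (-63/32)*t^6 + (245/16)*t^5 + (-1029/64)*t^4 < 0.
Proof.
  intros h1 h2. pose proof (poly_g t h1 h2).
  assert (0 < t^4) by (apply pow_lt; lra).
  assert (E: (27/64)*t^8 + (-27/16)*t^7 + (-63/32)*t^6 + (245/16)*t^5 + (-1029/64)*t^4 = t^4 * (27*t^4 - 108*t^3 - 126*t^2 + 980*t - 1029) / 64) by field.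
  rewrite E. assert (t^4 * (27*t^4 - 108*t^3 - 126*t^2 + 980*t - 1029) < 0) by (apply Rmult_pos_neg; lra). lra.
Qed.
Lemma poly_c2 t : 1 < t -> t <= 2 -> (-117/32)*t^6 + (-147/8)*t^5 + (577/16)*t^4 + (-147/8)*t^3 + (-117/32)*t^2 <= 0.
Proof.
  intros h1 h2. assert (0 < t^2) by (apply pow_lt; lra).
  assert (E: (-117/32)*t^6 + (-147/8)*t^5 + (577/16)*t^4 + (-147/8)*t^3 + (-117/32)*t^2 = - (t^2 * (117*t^4+588*t^3-1154*t^2+588*t+117)) / 32) by field.
  assert (P: 0 < 117*t^4+588*t^3-1154*t^2+588*t+117).
  { assert (h3: 1 <= t^2) by (replace (t^2) with (t*t) by ring; nra).
    assert (t^3 = t^2*t) by ring. assert (t <= t^2) by nra. assert (t <= t^3) by nra.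
    assert (G: 0 < 117*t^3 + 705*t^2 - 449*t + 139) by lra.
    assert (117*t^4+588*t^3-1154*t^2+588*t+117 = 256 + (t-1)*(117*t^3 + 705*t^2 - 449*t + 139)) by ring.
    assert (0 <= (t-1)*(117*t^3 + 705*t^2 - 449*t + 139)) by (apply Rmult_le_pos; lra). lra. }
  rewrite E. assert (0 < t^2 * (117*t^4+588*t^3-1154*t^2+588*t+117)) by (apply Rmult_lt_0_compat; lra). lra.
Qed.

Lemma disc_neg a x y : 1 < a -> a <= sqrt 2 -> (x/a)^2 + y^2 = 1 ->
  disc (hc0 a x y) (hc1 a x y) (hc2 a x y) (hc3 a x y) < 0.
Proof.
  intros h1 h2 hY. rewrite disc_expl.
  assert (ht1 : 1 < a^2) by nra.
  assert (ht2 : a^2 <= 2). { assert (0 <= a) by lra. assert (sqrt 2 * sqrt 2 = 2) by (apply sqrt_sqrt; lra). nra. }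
  assert (e8 : a^8 = (a^2)^4) by ring.
  assert (e6 : a^6 = (a^2)^3) by ring.
  assert (e4 : a^4 = (a^2)^2) by ring.
  assert (e10 : a^10 = (a^2)^5) by ring.
  assert (e12 : a^12 = (a^2)^6) by ring.
  assert (e14 : a^14 = (a^2)^7) by ring.
  assert (e16 : a^16 = (a^2)^8) by ring.
  rewrite e8, e6, e4, e10, e12, e14, e16.
  pose proof (poly_c1 _ ht1 ht2). pose proof (poly_c2 _ ht1 ht2). pose proof (poly_c3 _ ht1 ht2).
  set (t := a^2) in *.
  set (k1 := (-1029/64)*t^4 + (245/16)*t^3 + (-63/32)*t^2 + (-27/16)*t + (27/64)) in *.
  set (k2 := (-117/32)*t^6 + (-147/8)*t^5 + (577/16)*t^4 + (-147/8)*t^3 + (-117/32)*t^2) in *.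
  set (k3 := (27/64)*t^8 + (-27/16)*t^7 + (-63/32)*t^6 + (245/16)*t^5 + (-1029/64)*t^4) in *.
  assert (hxy : 0 < x^2 \/ 0 < y^2).
  { destruct (Req_dec y 0) as [->|hy]. left. assert (x <> 0). { intro; subst. unfold Rdiv in hY. nra. } nra. right. nra. }
  assert (X0: 0 <= x^2) by nra. assert (Y0: 0 <= y^2) by nra.
  assert (0 <= x^2*y^2) by nra.
  replace (x^4) with ((x^2)^2) by ring. replace (y^4) with ((y^2)^2) by ring.
  assert (k2 * (x^2 * y^2) <= 0) by (rewrite Rmult_comm; apply prod_np; lra).
  assert (k1 * (x^2)^2 <= 0) by (rewrite Rmult_comm; apply prod_np; [apply pow2_ge_0|lra]).
  assert (k3 * (y^2)^2 <= 0) by (rewrite Rmult_comm; apply prod_np; [apply pow2_ge_0|lra]).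
  destruct hxy as [hx|hy].
  - assert (0 < (x^2)^2) by (apply pow_lt; lra).
    assert (k1 * (x^2)^2 < 0) by (rewrite Rmult_comm; apply Rmult_pos_neg; lra). lra.
  - assert (0 < (y^2)^2) by (apply pow_lt; lra).
    assert (k3 * (y^2)^2 < 0) by (rewrite Rmult_comm; apply Rmult_pos_neg; lra). lra.
Qed.

Definition rotx (c s : R) := c/2 - r3/2*s.
Definition roty (c s : R) := r3/2*c + s/2.

Lemma irot_rot c s : irx (rotx c s) (roty c s) = c /\ iry (rotx c s) (roty c s) = s.
Proof. unfold irx, iry, rotx, roty; split; r3ring. Qed.

Lemma sqrt_eq_sq X r : 0 <= X -> sqrt X = r -> X = r^2.
Proof. intros h e. rewrite <- e. simpl. rewrite Rmult_1_r, sqrt_sqrt; auto. Qed.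

Lemma dist_sq p q r : Defs.dist p q = r -> (fst p - fst q)^2 + (snd p - snd q)^2 = r^2.
Proof. unfold Defs.dist. intro e. apply sqrt_eq_sq; auto. apply Rplus_le_le_0_compat; apply pow2_ge_0. Qed.

Lemma orient (px py qx qy wx wy r : R) : 0 < r ->
  Defs.dist (px,py) (qx,qy) = r -> Defs.dist (qx,qy) (wx,wy) = r -> Defs.dist (wx,wy) (px,py) = r ->
  (wx - px = rotx (qx-px) (qy-py) /\ wy - py = roty (qx-px) (qy-py)) \/
  (qx - px = rotx (wx-px) (wy-py) /\ qy - py = roty (wx-px) (wy-py)).
Proof.
  intros hr h1 h2 h3.
  apply dist_sq in h1. apply dist_sq in h2. apply dist_sq in h3. cbn [fst snd] in h1, h2, h3.
  set (c1 := qx - px) in *. set (s1 := qy - py) in *.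
  set (c2 := wx - px) in *. set (s2 := wy - py) in *.
  assert (E1 : c1^2 + s1^2 = r^2) by (rewrite <- h1; unfold c1, s1; ring).
  assert (E2 : c2^2 + s2^2 = r^2) by (rewrite <- h3; unfold c2, s2; ring).
  assert (E3 : (c1-c2)^2 + (s1-s2)^2 = r^2) by (rewrite <- h2; unfold c1, s1, c2, s2; ring).
  assert (dot : c1*c2 + s1*s2 = r^2/2) by nra.
  assert (cr : (c1*s2 - s1*c2)^2 = 3/4 * r^4).
  { assert ((c1*s2 - s1*c2)^2 = (c1^2+s1^2)*(c2^2+s2^2) - (c1*c2+s1*s2)^2) by ring.
    rewrite H, E1, E2, dot. field. }
  assert (cr' : (c1*s2 - s1*c2 - r3/2*r^2) * (c1*s2 - s1*c2 + r3/2*r^2) = 0).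
  { assert (r3 * r3 = 3) by apply r3sq. nra. }
  assert (hr2 : 0 < r^2) by nra.
  apply Rmult_integral in cr'. destruct cr' as [h|h].
  - left. unfold rotx, roty.
    assert (I1 : (c1^2+s1^2)*c2 = (c1*c2+s1*s2)*c1 - (c1*s2-s1*c2)*s1) by ring.
    assert (I2 : (c1^2+s1^2)*s2 = (c1*c2+s1*s2)*s1 + (c1*s2-s1*c2)*c1) by ring.
    assert (X : c1*s2 - s1*c2 = r3/2*r^2) by lra.
    rewrite E1, dot, X in I1, I2. split.
    + apply (Rmult_eq_reg_l (r^2)); [|lra]. rewrite I1. field.
    + apply (Rmult_eq_reg_l (r^2)); [|lra]. rewrite I2. field.
  - right. unfold rotx, roty.
    assert (I1 : (c2^2+s2^2)*c1 = (c1*c2+s1*s2)*c2 + (c1*s2-s1*c2)*s2) by ring.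
    assert (I2 : (c2^2+s2^2)*s1 = (c1*c2+s1*s2)*s2 - (c1*s2-s1*c2)*c2) by ring.
    assert (X : c1*s2 - s1*c2 = - (r3/2*r^2)) by lra.
    rewrite E2, dot, X in I1, I2. split.
    + apply (Rmult_eq_reg_l (r^2)); [|lra]. rewrite I1. field.
    + apply (Rmult_eq_reg_l (r^2)); [|lra]. rewrite I2. field.
Qed.

Lemma onY_shift a x y c s : a <> 0 -> (x/a)^2 + y^2 = 1 -> ((x+c)/a)^2 + (y+s)^2 = 1 ->
  Qf a c s + 2 * Nf a x y c s = 0.
Proof.
  intros ha h1 h2.
  assert (E : Qf a c s + 2 * Nf a x y c s = a^2 * ((((x+c)/a)^2 + (y+s)^2) - ((x/a)^2 + y^2))).
  { unfold Qf, Nf. field. auto. }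
  rewrite E, h1, h2. ring.
Qed.

Lemma Hroot a x y c s : Qf a c s + 2 * Nf a x y c s = 0 ->
  Qf a (irx c s) (iry c s) + 2 * Nf a x y (irx c s) (iry c s) = 0 -> Hf a x y c s = 0.
Proof.
  intros h1 h2. unfold Hf.
  replace (Qf a c s) with (-2 * Nf a x y c s) by lra.
  replace (Qf a (irx c s) (iry c s)) with (-2 * Nf a x y (irx c s) (iry c s)) by lra. ring.
Qed.

Lemma tri_v a x y r : 1 < a -> onY a (x,y) -> side_of a (x,y) r ->
  0 < r /\ exists c s, c^2 + s^2 = r^2 /\ Qf a c s + 2 * Nf a x y c s = 0 /\
    Qf a (irx c s) (iry c s) + 2 * Nf a x y (irx c s) (iry c s) = 0.
Proof.
  intros ha hp [[qx qy] [[wx wy] [hq [hw [hr [d1 [d2 d3]]]]]]].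
  split; auto.
  unfold onY in *; cbn [fst snd] in *.
  assert (a <> 0) by lra.
  pose proof (dist_sq _ _ _ d1) as e1. cbn [fst snd] in e1.
  pose proof (dist_sq _ _ _ d3) as e3. cbn [fst snd] in e3.
  destruct (orient x y qx qy wx wy r hr d1 d2 d3) as [[o1 o2]|[o1 o2]].
  - exists (wx - x), (wy - y). destruct (irot_rot (qx-x) (qy-y)) as [i1 i2].
    rewrite o1, o2, i1, i2. split; [|split].
    + rewrite <- e3, <- o1, <- o2. ring.
    + apply onY_shift; auto. rewrite o1, o2 in *. 
      replace (x + rotx (qx - x) (qy - y)) with wx by lra. replace (y + roty (qx - x) (qy - y)) with wy by lra. auto.
    + apply onY_shift; auto. replace (x + (qx - x)) with qx by ring. replace (y + (qy - y)) with qy by ring. auto.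
  - exists (qx - x), (qy - y). destruct (irot_rot (wx-x) (wy-y)) as [i1 i2].
    rewrite o1, o2, i1, i2. split; [|split].
    + rewrite <- e1, <- o1, <- o2. ring.
    + apply onY_shift; auto. 
      replace (x + rotx (wx - x) (wy - y)) with qx by lra. replace (y + roty (wx - x) (wy - y)) with qy by lra. auto.
    + apply onY_shift; auto. replace (x + (wx - x)) with wx by ring. replace (y + (wy - y)) with wy by ring. auto.
Qed.

Lemma Qf_pos a c s : 1 < a -> c^2 + s^2 > 0 -> Qf a c s > 0.
Proof. intros. unfold Qf. assert (a^2 > 1) by nra. nra. Qed.

Lemma uniq a p r r' : 1 < a -> a <= sqrt 2 -> onY a p -> side_of a p r -> side_of a p r' -> r = r'.
Proof.
  intros ha1 ha2 hp h h'. destruct p as [x y].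
  destruct (tri_v a x y r ha1 hp h) as [hr [c1 [s1 [n1 [q1 q1']]]]].
  destruct (tri_v a x y r' ha1 hp h') as [hr' [c2 [s2 [n2 [q2 q2']]]]].
  pose proof (Hroot _ _ _ _ _ q1 q1') as H1. pose proof (Hroot _ _ _ _ _ q2 q2') as H2.
  rewrite Hf_coef in H1, H2.
  unfold onY in hp; cbn [fst snd] in hp.
  destruct (Req_dec (c1*s2-s1*c2) 0) as [hd|hd].
  -
    assert (hv1 : c1^2+s1^2 > 0) by nra.
    assert (hv2 : c2^2+s2^2 > 0) by nra.
    set (l := (c1*c2+s1*s2)/(c1^2+s1^2)).
    assert (ec : c2 = l*c1).
    { unfold l. apply (Rmult_eq_reg_l (c1^2+s1^2)); [|lra].
      replace ((c1^2+s1^2)*((c1*c2+s1*s2)/(c1^2+s1^2)*c1)) with ((c1*c2+s1*s2)*c1) by (field; lra).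
      replace ((c1*c2+s1*s2)*c1) with ((c1^2+s1^2)*c2 + (c1*s2-s1*c2)*s1) by ring. rewrite hd. ring. }
    assert (es : s2 = l*s1).
    { unfold l. apply (Rmult_eq_reg_l (c1^2+s1^2)); [|lra].
      replace ((c1^2+s1^2)*((c1*c2+s1*s2)/(c1^2+s1^2)*s1)) with ((c1*c2+s1*s2)*s1) by (field; lra).
      replace ((c1*c2+s1*s2)*s1) with ((c1^2+s1^2)*s2 - (c1*s2-s1*c2)*c1) by ring. rewrite hd. ring. }
    assert (QQ : Qf a c2 s2 = l^2 * Qf a c1 s1) by (rewrite ec, es; unfold Qf; ring).
    assert (NN : Nf a x y c2 s2 = l * Nf a x y c1 s1) by (rewrite ec, es; unfold Nf; ring).
    assert (Qp : Qf a c1 s1 > 0) by (apply Qf_pos; lra).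
    assert (l <> 0). { intro e. rewrite e in ec, es. rewrite ec, es in hv2. lra. }
    assert (l * (l - 1) * Qf a c1 s1 = 0) by nra.
    assert (l = 1). { apply Rmult_integral in H0. destruct H0 as [H0|H0]. apply Rmult_integral in H0. destruct H0; [contradiction|lra]. lra. }
    assert (r^2 = r'^2). { rewrite <- n1, <- n2, ec, es, H3. ring. }
    nra.
  - exfalso. pose proof (two_roots_disc _ _ _ _ _ _ _ _ H1 H2 hd).
    pose proof (disc_neg a x y ha1 ha2 hp). lra.
Qed.

Lemma dist_val px py qx qy r : 0 <= r -> (px-qx)^2 + (py-qy)^2 = r^2 -> Defs.dist (px,py) (qx,qy) = r.
Proof. intros h e. unfold Defs.dist; cbn [fst snd]. rewrite e. apply sqrt_pow2; auto. Qed.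

Lemma exist_tri a x y : 1 < a -> onY a (x,y) -> exists r, side_of a (x,y) r.
Proof.
  intros ha hp. unfold onY in hp; cbn [fst snd] in hp.
  assert (ha0 : a <> 0) by lra.
  set (f := fun t => Hf a x y (cos t) (sin t)).
  assert (cf : continuity f).
  { unfold f, Hf, Nf, Qf, irx, iry. reg. }
  assert (f0 : f 0 * f PI <= 0).
  { unfold f. rewrite cos_0, sin_0, cos_PI, sin_PI. rewrite !Hf_coef. unfold Hc.
    assert (E: hc0 a x y * 1 ^ 3 + hc1 a x y * 1 ^ 2 * 0 + hc2 a x y * 1 * 0 ^ 2 + hc3 a x y * 0 ^ 3 = hc0 a x y) by ring.
    assert (E': hc0 a x y * (-1) ^ 3 + hc1 a x y * (-1) ^ 2 * 0 + hc2 a x y * (-1) * 0 ^ 2 + hc3 a x y * 0 ^ 3 = - hc0 a x y) by ring.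
    rewrite E, E'. nra. }
  destruct (IVT_cor f 0 PI cf (Rlt_le _ _ PI_RGT_0) f0) as [th [_ hth]].
  unfold f in hth. set (c := cos th) in *. set (s := sin th) in *.
  assert (u : c^2 + s^2 = 1) by (unfold c, s; rewrite Rplus_comm; pose proof (sin2_cos2 th) as hh; unfold Rsqr in hh; nra).
  assert (Qp : Qf a c s > 0) by (apply Qf_pos; lra).
  assert (ir1 : irx c s ^2 + iry c s ^2 = 1) by (rewrite <- u; unfold irx, iry; r3ring).
  assert (Qp' : Qf a (irx c s) (iry c s) > 0) by (apply Qf_pos; lra).
  assert (Nn : Nf a x y c s <> 0).
  { intro e. unfold Hf in hth. rewrite e in hth.
    assert (e2 : Nf a x y (irx c s) (iry c s) = 0) by nra.
    unfold Nf, irx, iry in e, e2.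
    assert (ex : x * (r3/2) * (c^2+s^2) = 0).
    { replace (x * (r3/2) * (c^2+s^2)) with (-(iry c s) * (x*c + a^2*y*s) + s * (x*(c/2 + r3/2*s) + a^2*y*(-(r3/2)*c+s/2))) by (unfold iry; field).
      unfold iry; rewrite e, e2; field. }
    assert (ey : a^2 * y * (r3/2) * (c^2+s^2) = 0).
    { replace (a^2 * y * (r3/2) * (c^2+s^2)) with ((irx c s) * (x*c + a^2*y*s) - c * (x*(c/2 + r3/2*s) + a^2*y*(-(r3/2)*c+s/2))) by (unfold irx; field).
      unfold irx; rewrite e, e2; field. }
    rewrite u in ex, ey. pose proof r3pos.
    rewrite Rmult_1_r in ex, ey.
    apply Rmult_integral in ex. destruct ex as [ex|ex]; [|lra].
    apply Rmult_integral in ey. destruct ey as [ey|ey]; [|lra].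
    apply Rmult_integral in ey. destruct ey as [ey|ey]; [apply pow_nonzero in ey; lra|].
    subst. unfold Rdiv in hp. rewrite Rmult_0_l in hp. lra. }
  set (rho := -2 * Nf a x y c s / Qf a c s).
  assert (rho <> 0). { unfold rho. intro e. apply Nn. apply (Rmult_eq_reg_r (-2 / Qf a c s)). 2:{ apply Rmult_integral_contrapositive; split; [lra|apply Rinv_neq_0_compat; lra]. }
    rewrite Rmult_0_l. rewrite <- e. unfold Rdiv. ring. }
  assert (hQ : rho * Qf a c s = -2 * Nf a x y c s) by (unfold rho; field; lra).
  assert (hQ' : rho * Qf a (irx c s) (iry c s) = -2 * Nf a x y (irx c s) (iry c s)).
  { unfold Hf in hth. apply (Rmult_eq_reg_l (Nf a x y c s)); auto.
    replace (Nf a x y c s * (rho * Qf a (irx c s) (iry c s))) with (rho * (Nf a x y c s * Qf a (irx c s) (iry c s))) by ring.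
    replace (Nf a x y c s * Qf a (irx c s) (iry c s)) with (Nf a x y (irx c s) (iry c s) * Qf a c s) by lra.
    replace (rho * (Nf a x y (irx c s) (iry c s) * Qf a c s)) with (Nf a x y (irx c s) (iry c s) * (rho * Qf a c s)) by ring.
    rewrite hQ. ring. }
  exists (Rabs rho).
  exists (x + rho * irx c s, y + rho * iry c s), (x + rho * c, y + rho * s).
  unfold onY; cbn [fst snd]. split; [|split; [|split; [|split; [|split]]]].
  - replace (((x + rho * irx c s) / a) ^ 2 + (y + rho * iry c s) ^ 2) with
      (((x/a)^2 + y^2) + rho * (rho * Qf a (irx c s) (iry c s) + 2 * Nf a x y (irx c s) (iry c s)) / a^2)
      by (unfold Qf, Nf; field; auto).
    rewrite hQ', hp. field; auto.
  - replace (((x + rho * c) / a) ^ 2 + (y + rho * s) ^ 2) with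
      (((x/a)^2 + y^2) + rho * (rho * Qf a c s + 2 * Nf a x y c s) / a^2)
      by (unfold Qf, Nf; field; auto).
    rewrite hQ, hp. field; auto.
  - apply Rabs_pos_lt; auto.
  - apply dist_val. apply Rabs_pos. rewrite pow2_abs.
    replace ((x - (x + rho * irx c s)) ^ 2 + (y - (y + rho * iry c s)) ^ 2) with (rho^2 * (irx c s ^2 + iry c s ^2)) by ring.
    rewrite ir1; ring.
  - apply dist_val. apply Rabs_pos. rewrite pow2_abs.
    replace ((x + rho * irx c s - (x + rho * c)) ^ 2 + (y + rho * iry c s - (y + rho * s)) ^ 2) with (rho^2 * ((irx c s - c) ^2 + (iry c s - s) ^2)) by ring.
    replace ((irx c s - c) ^2 + (iry c s - s) ^2) with (c^2+s^2) by (unfold irx, iry; r3ring).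
    rewrite u; ring.
  - apply dist_val. apply Rabs_pos. rewrite pow2_abs.
    replace ((x + rho * c - x) ^ 2 + (y + rho * s - y) ^ 2) with (rho^2 * (c^2+s^2)) by ring.
    rewrite u; ring.
Qed.

(* The family of inscribed equilateral triangles *)
Definition C3 (c s : R) := c^3 - 3*c*s^2.
Definition S3 (c s : R) := 3*c^2*s - s^3.
Definition Dd a c s := (a^2-1)^2/4 * (C3 c s ^2 + S3 c s ^2 / a^2) + 2*(a^2+1).
Definition kap a c s := / sqrt (Dd a c s).
Definition P1 a c s := -(a^2-1)/2 * C3 c s - 2*c.
Definition P2 a c s := (a^2-1)/(2*a) * S3 c s + 2*a*s.
Definition Vp a c s : pt := (kap a c s * (a * P1 a c s), kap a c s * P2 a c s).
Definition side a c s := 2 * r3 * a * kap a c s.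
Definition wx (c s : R) := -c/2 - r3/2*s.
Definition wy (c s : R) := r3/2*c - s/2.

Lemma C3w c s : C3 (wx c s) (wy c s) = C3 c s.
Proof. unfold C3, wx, wy. r3ring. Qed.
Lemma S3w c s : S3 (wx c s) (wy c s) = S3 c s.
Proof. unfold S3, wx, wy. r3ring. Qed.
Lemma kapw a c s : kap a (wx c s) (wy c s) = kap a c s.
Proof. unfold kap, Dd. rewrite C3w, S3w. auto. Qed.
Lemma w_unit c s : c^2 + s^2 = 1 -> wx c s ^2 + wy c s ^2 = 1.
Proof. intro u. rewrite <- u. unfold wx, wy. r3ring. Qed.
Lemma www c s : wx (wx (wx c s) (wy c s)) (wy (wx c s) (wy c s)) = c /\
                wy (wx (wx c s) (wy c s)) (wy (wx c s) (wy c s)) = s.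
Proof. unfold wx, wy. split; r3ring. Qed.

Lemma Dd_pos a c s : 1 < a -> 0 < Dd a c s.
Proof.
  intro ha. unfold Dd. assert (0 < a^2) by nra.
  assert (0 <= (a^2-1)^2/4) by (apply Rmult_le_pos; [apply pow2_ge_0|lra]).
  assert (0 <= C3 c s ^2 + S3 c s ^2 / a^2).
  { apply Rplus_le_le_0_compat. apply pow2_ge_0. apply Rmult_le_pos. apply pow2_ge_0. apply Rlt_le, Rinv_0_lt_compat; auto. }
  assert (0 <= (a^2-1)^2/4 * (C3 c s ^2 + S3 c s ^2 / a^2)) by (apply Rmult_le_pos; auto).
  nra.
Qed.

Lemma kap_pos a c s : 1 < a -> 0 < kap a c s.
Proof. intro. unfold kap. apply Rinv_0_lt_compat, sqrt_lt_R0, Dd_pos; auto. Qed.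

Lemma kap_sq a c s : 1 < a -> kap a c s ^ 2 * Dd a c s = 1.
Proof.
  intro ha. unfold kap. pose proof (Dd_pos a c s ha).
  assert (sqrt (Dd a c s) ^2 = Dd a c s) by (simpl; rewrite Rmult_1_r; apply sqrt_sqrt; lra).
  assert (sqrt (Dd a c s) <> 0) by (apply Rgt_not_eq, sqrt_lt_R0; auto).
  rewrite <- H0 at 2. field. auto.
Qed.

Lemma P12 a c s : 1 < a -> c^2 + s^2 = 1 -> P1 a c s ^2 + P2 a c s ^2 = Dd a c s.
Proof.
  intros ha u.
  assert (E : P1 a c s ^2 + P2 a c s ^2 = Dd a c s + 2*(a^2-1)*(c^2-s^2)*(c^2+s^2-1) + (2*a^2+2)*(c^2+s^2-1)).
  { unfold P1, P2, Dd, C3, S3. field. lra. }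
  rewrite E, u. ring.
Qed.

Lemma V_onY a c s : 1 < a -> c^2 + s^2 = 1 -> onY a (Vp a c s).
Proof.
  intros ha u. unfold onY, Vp; cbn [fst snd].
  replace ((kap a c s * (a * P1 a c s) / a) ^ 2 + (kap a c s * P2 a c s) ^ 2) with
    (kap a c s ^2 * (P1 a c s ^2 + P2 a c s ^2)) by (field; lra).
  rewrite P12; auto. apply kap_sq; auto.
Qed.

Lemma V_dist a c s : 1 < a -> c^2 + s^2 = 1 -> Defs.dist (Vp a c s) (Vp a (wx c s) (wy c s)) = side a c s.
Proof.
  intros ha u. unfold Vp. rewrite kapw. apply dist_val.
  unfold side. pose proof (kap_pos a c s ha). pose proof r3pos. 
  apply Rmult_le_pos; [|lra]. apply Rmult_le_pos; lra.
  replace ((kap a c s * (a * P1 a c s) - kap a c s * (a * P1 a (wx c s) (wy c s))) ^ 2 +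
   (kap a c s * P2 a c s - kap a c s * P2 a (wx c s) (wy c s)) ^ 2) with
   (kap a c s ^2 * ((a * (P1 a c s - P1 a (wx c s) (wy c s)))^2 + (P2 a c s - P2 a (wx c s) (wy c s))^2)) by ring.
  unfold P1, P2. rewrite C3w, S3w.
  replace ((a * (- (a ^ 2 - 1) / 2 * C3 c s - 2 * c - (- (a ^ 2 - 1) / 2 * C3 c s - 2 * wx c s))) ^ 2 +
   ((a ^ 2 - 1) / (2 * a) * S3 c s + 2 * a * s - ((a ^ 2 - 1) / (2 * a) * S3 c s + 2 * a * wy c s)) ^ 2)
   with (4 * a^2 * ((c - wx c s)^2 + (s - wy c s)^2)) by (field; lra).
  replace ((c - wx c s)^2 + (s - wy c s)^2) with (3 * (c^2+s^2)) by (unfold wx, wy; r3ring).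
  rewrite u. unfold side. replace ((2*r3*a*kap a c s)^2) with (4 * (r3^2) * a^2 * kap a c s ^2) by ring.
  rewrite r3_2. ring.
Qed.

Lemma V_side a c s : 1 < a -> c^2 + s^2 = 1 -> side_of a (Vp a c s) (side a c s).
Proof.
  intros ha u. set (c' := wx c s). set (s' := wy c s).
  set (c'' := wx c' s'). set (s'' := wy c' s').
  assert (u' : c'^2 + s'^2 = 1) by (apply w_unit; auto).
  assert (u'' : c''^2 + s''^2 = 1) by (apply w_unit; auto).
  exists (Vp a c' s'), (Vp a c'' s''). split; [|split; [|split; [|split; [|split]]]].
  - apply V_onY; auto.
  - apply V_onY; auto.
  - unfold side. pose proof (kap_pos a c s ha). pose proof r3pos. 
    apply Rmult_lt_0_compat; [|lra]. apply Rmult_lt_0_compat; lra.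
  - apply V_dist; auto.
  - replace (side a c s) with (side a c' s') by (unfold side, c', s'; rewrite kapw; auto).
    apply V_dist; auto.
  - replace (side a c s) with (side a c'' s'') by (unfold side, c'', s'', c', s'; rewrite !kapw; auto).
    destruct (www c s) as [e1 e2]. fold c' s' in e1, e2. fold c'' s'' in e1, e2.
    rewrite <- e1 at 1. rewrite <- e2 at 1. apply V_dist; auto.
Qed.

Definition U0x k Mx (My Sx Sy : R) := Mx + Sx - k*Sx.
Definition U0y k (Mx : R) My (Sx : R) Sy := My + Sy + k*Sy.
Definition U1x k Mx (My : R) Sx Sy := Mx - Sx/2 + r3/2*Sy + k*Sx/2 - r3/2*k*Sy.
Definition U1y k (Mx : R) My Sx Sy := My - r3/2*Sx - Sy/2 - r3/2*k*Sx - k*Sy/2.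
Definition U2x k Mx (My : R) Sx Sy := Mx - Sx/2 - r3/2*Sy + k*Sx/2 + r3/2*k*Sy.
Definition U2y k (Mx : R) My Sx Sy := My + r3/2*Sx - Sy/2 + r3/2*k*Sx - k*Sy/2.
Definition KK k Mx My Sx Sy := Mx^2+My^2+(1+k^2)*(Sx^2+Sy^2).
Definition Xr k Mx My Sx Sy := (1-k)*Mx*Sx+(1+k)*My*Sy-k*(Sx^2-Sy^2).
Definition Xi k Mx My Sx Sy := (1-k)*Mx*Sy-(1+k)*My*Sx+2*k*Sx*Sy.

Lemma g0_id k Mx My Sx Sy : U0x k Mx My Sx Sy ^2 + U0y k Mx My Sx Sy ^2 = KK k Mx My Sx Sy + 2 * Xr k Mx My Sx Sy.
Proof. unfold U0x, U0y, KK, Xr. ring. Qed.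
Lemma g1_id k Mx My Sx Sy : U1x k Mx My Sx Sy ^2 + U1y k Mx My Sx Sy ^2 =
  KK k Mx My Sx Sy + 2 * (-1/2 * Xr k Mx My Sx Sy + r3/2 * Xi k Mx My Sx Sy).
Proof. unfold U1x, U1y, KK, Xr, Xi. r3ring. Qed.
Lemma g2_id k Mx My Sx Sy : U2x k Mx My Sx Sy ^2 + U2y k Mx My Sx Sy ^2 =
  KK k Mx My Sx Sy + 2 * (-1/2 * Xr k Mx My Sx Sy - r3/2 * Xi k Mx My Sx Sy).
Proof. unfold U2x, U2y, KK, Xr, Xi. r3ring. Qed.

Lemma coreT a Mx My sg c s : 1 < a -> 0 < sg -> c^2+s^2 = 1 ->
  U0x ((a+1)/(a-1)) Mx My (sg*c) (sg*s) ^2 + U0y ((a+1)/(a-1)) Mx My (sg*c) (sg*s) ^2 = 9 ->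
  U1x ((a+1)/(a-1)) Mx My (sg*c) (sg*s) ^2 + U1y ((a+1)/(a-1)) Mx My (sg*c) (sg*s) ^2 = 9 ->
  U2x ((a+1)/(a-1)) Mx My (sg*c) (sg*s) ^2 + U2y ((a+1)/(a-1)) Mx My (sg*c) (sg*s) ^2 = 9 ->
  a * (U0x ((a+1)/(a-1)) Mx My (sg*c) (sg*s) / 3) = kap a c s * (a * P1 a c s) /\
  U0y ((a+1)/(a-1)) Mx My (sg*c) (sg*s) / 3 = kap a c s * P2 a c s.
Proof.
  intros ha hs u h0 h1 h2.
  rewrite g0_id in h0. rewrite g1_id in h1. rewrite g2_id in h2.
  set (k := (a+1)/(a-1)) in *.
  set (K := KK k Mx My (sg*c) (sg*s)) in *.
  set (xr := Xr k Mx My (sg*c) (sg*s)) in *.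
  set (xi := Xi k Mx My (sg*c) (sg*s)) in *.
  assert (hK : K = 9) by lra.
  assert (hxr : xr = 0) by lra.
  assert (hxi : xi = 0). { pose proof r3pos. assert (r3 * xi = 0) by lra. apply Rmult_integral in H0. destruct H0; lra. }
  set (B1 := (1-k)*Mx*c + (1+k)*My*s - k*sg*(c^2-s^2)).
  set (B2 := (1-k)*Mx*s - (1+k)*My*c + 2*k*sg*c*s).
  assert (e1 : xr = sg * B1) by (unfold xr, Xr, B1; ring).
  assert (e2 : xi = sg * B2) by (unfold xi, Xi, B2; ring).
  assert (b1 : B1 = 0). { rewrite hxr in e1. symmetry in e1. apply Rmult_integral in e1. destruct e1; lra. }
  assert (b2 : B2 = 0). { rewrite hxi in e2. symmetry in e2. apply Rmult_integral in e2. destruct e2; lra. }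
  assert (hMx' : (1-k)*Mx*(c^2+s^2) - k*sg*C3 c s = c*B1 + s*B2) by (unfold B1, B2, C3; ring).
  assert (hMy' : (1+k)*My*(c^2+s^2) - k*sg*S3 c s = s*B1 - c*B2) by (unfold B1, B2, S3; ring).
  rewrite u, b1, b2 in hMx', hMy'.
  assert (am1 : a - 1 <> 0) by lra. assert (a0 : a <> 0) by lra.
  assert (hMx : Mx = - (a+1)/2 * sg * C3 c s).
  { apply (Rmult_eq_reg_l (1-k)). 2:{ replace (1-k) with (-2/(a-1)) by (unfold k; field; auto). intro e. assert (0 < 2/(a-1)) by (apply Rdiv_lt_0_compat; lra). lra. }
    transitivity (k*sg*C3 c s). lra. unfold k. field. auto. }
  assert (hMy : My = (a+1)/(2*a) * sg * S3 c s).
  { apply (Rmult_eq_reg_l (1+k)). 2:{ unfold k. intro e. assert (0 < (a+1)/(a-1)) by (apply Rdiv_lt_0_compat; lra). lra. }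
    transitivity (k*sg*S3 c s). lra. unfold k. field. auto. }
  set (k0 := sg / (3*(a-1))).
  assert (hk0 : 0 < k0) by (unfold k0; apply Rdiv_lt_0_compat; lra).
  assert (hD : k0^2 * Dd a c s = K / 9).
  { unfold K, KK, k0, Dd. rewrite hMx, hMy. unfold k.
    replace ((sg*c)^2 + (sg*s)^2) with (sg^2 * (c^2+s^2)) by ring. rewrite u.
    field. auto. }
  rewrite hK in hD.
  pose proof (kap_sq a c s ha). pose proof (kap_pos a c s ha). pose proof (Dd_pos a c s ha).
  assert (hk : k0 = kap a c s).
  { assert (k0^2 = kap a c s ^2). { apply (Rmult_eq_reg_r (Dd a c s)); lra. }
    nra. }
  rewrite <- hk. split.
  - unfold U0x, P1. rewrite hMx. unfold k0, k. field. auto.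
  - unfold U0y, P2. rewrite hMy. unfold k0, k. field. auto.
Qed.

Lemma T_oriented a x0 y0 x1 y1 x2 y2 : 1 < a ->
  onY a (x0,y0) -> onY a (x1,y1) -> onY a (x2,y2) ->
  x2 - x0 = rotx (x1-x0) (y1-y0) -> y2 - y0 = roty (x1-x0) (y1-y0) ->
  (x1 <> x0 \/ y1 <> y0) ->
  exists c s, c^2 + s^2 = 1 /\ Vp a c s = (x0, y0).
Proof.
  intros ha h0 h1 h2 o1 o2 hne.
  unfold onY in h0, h1, h2; cbn [fst snd] in h0, h1, h2.
  assert (a0 : a <> 0) by lra. assert (am1 : a - 1 <> 0) by lra.
  set (p0 := x0/a) in *. set (p1 := x1/a) in *. set (p2 := x2/a) in *.
  assert (ex0 : x0 = a*p0) by (unfold p0; field; auto).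
  assert (ex1 : x1 = a*p1) by (unfold p1; field; auto).
  assert (ex2 : x2 = a*p2) by (unfold p2; field; auto).
  clearbody p0 p1 p2. subst x0 x1 x2.
  set (Mx := p0+p1+p2). set (My := y0+y1+y2).
  set (Sx := p0+(-p1/2-r3/2*y1)+(-p2/2+r3/2*y2)).
  set (Sy := y0+(r3/2*p1-y1/2)+(-r3/2*p2-y2/2)).
  set (Tx := p0+(-p1/2+r3/2*y1)+(-p2/2-r3/2*y2)).
  set (Ty := y0+(-r3/2*p1-y1/2)+(r3/2*p2-y2/2)).
  set (k := (a+1)/(a-1)).
  assert (L1 : (a+1)/2*Sx + (a-1)/2*Tx = 0).
  { assert (E : (a+1)/2*Sx + (a-1)/2*Tx = -1/2 * (a*p2 - a*p0 - rotx (a*p1-a*p0) (y1-y0)) + r3/2 * (y2 - y0 - roty (a*p1-a*p0) (y1-y0)))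
      by (unfold Sx, Tx, rotx, roty; r3ring).
    rewrite E, <- o1, <- o2. ring. }
  assert (L2 : (a+1)/2*Sy - (a-1)/2*Ty = 0).
  { assert (E : (a+1)/2*Sy - (a-1)/2*Ty = -(r3/2) * (a*p2 - a*p0 - rotx (a*p1-a*p0) (y1-y0)) - 1/2 * (y2 - y0 - roty (a*p1-a*p0) (y1-y0)))
      by (unfold Sy, Ty, rotx, roty; r3ring).
    rewrite E, <- o1, <- o2. ring. }
  assert (hTx : Tx = -k*Sx). { unfold k. apply (Rmult_eq_reg_l ((a-1)/2)). 2:{ intro e. lra. } 
    replace ((a-1)/2 * (-((a+1)/(a-1))*Sx)) with (-((a+1)/2*Sx)) by (field; auto). lra. }
  assert (hTy : Ty = k*Sy). { unfold k. apply (Rmult_eq_reg_l ((a-1)/2)). 2:{ intro e. lra. } 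
    replace ((a-1)/2 * (((a+1)/(a-1))*Sy)) with ((a+1)/2*Sy) by (field; auto). lra. }
  assert (i0x : U0x k Mx My Sx Sy = 3*p0).
  { unfold U0x. replace (Mx + Sx - k*Sx) with (Mx + Sx + Tx) by (rewrite hTx; ring). unfold Mx, Sx, Tx. r3ring. }
  assert (i0y : U0y k Mx My Sx Sy = 3*y0).
  { unfold U0y. replace (My + Sy + k*Sy) with (My + Sy + Ty) by (rewrite hTy; ring). unfold My, Sy, Ty. r3ring. }
  assert (i1x : U1x k Mx My Sx Sy = 3*p1).
  { unfold U1x. replace (Mx - Sx/2 + r3/2*Sy + k*Sx/2 - r3/2*k*Sy) with (Mx - Sx/2 + r3/2*Sy - Tx/2 - r3/2*Ty) by (rewrite hTx, hTy; field).
    unfold Mx, Sx, Sy, Tx, Ty. r3ring. }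
  assert (i1y : U1y k Mx My Sx Sy = 3*y1).
  { unfold U1y. replace (My - r3/2*Sx - Sy/2 - r3/2*k*Sx - k*Sy/2) with (My - r3/2*Sx - Sy/2 + r3/2*Tx - Ty/2) by (rewrite hTx, hTy; field).
    unfold My, Sx, Sy, Tx, Ty. r3ring. }
  assert (i2x : U2x k Mx My Sx Sy = 3*p2).
  { unfold U2x. replace (Mx - Sx/2 - r3/2*Sy + k*Sx/2 + r3/2*k*Sy) with (Mx - Sx/2 - r3/2*Sy - Tx/2 + r3/2*Ty) by (rewrite hTx, hTy; field).
    unfold Mx, Sx, Sy, Tx, Ty. r3ring. }
  assert (i2y : U2y k Mx My Sx Sy = 3*y2).
  { unfold U2y. replace (My + r3/2*Sx - Sy/2 + r3/2*k*Sx - k*Sy/2) with (My + r3/2*Sx - Sy/2 - r3/2*Tx - Ty/2) by (rewrite hTx, hTy; field).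
    unfold My, Sx, Sy, Tx, Ty. r3ring. }
  assert (hS : Sx^2 + Sy^2 > 0).
  { destruct (Req_dec (Sx^2+Sy^2) 0) as [e|e]; [|pose proof (pow2_ge_0 Sx); pose proof (pow2_ge_0 Sy); lra].
    exfalso. assert (Sx = 0) by nra. assert (Sy = 0) by nra.
    assert (Tx = 0) by (rewrite hTx; subst; nra). assert (Ty = 0) by (rewrite hTy; subst; nra).
    unfold U0x, U1x in i0x, i1x. unfold U0y, U1y in i0y, i1y.
    rewrite H in i0x, i1x, i1y. rewrite H0 in i0y, i1x, i1y.
    destruct hne as [hne|hne]; apply hne; [apply Rmult_eq_compat_l|]; lra. }
  clearbody Mx My Sx Sy Tx Ty.
  set (sg := sqrt (Sx^2+Sy^2)).
  assert (hsg : 0 < sg) by (apply sqrt_lt_R0; auto).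
  assert (hsg2 : sg^2 = Sx^2 + Sy^2) by (replace (sg^2) with (sg*sg) by ring; unfold sg; apply sqrt_sqrt; lra).
  assert (hu : (Sx/sg)^2 + (Sy/sg)^2 = 1).
  { replace ((Sx/sg)^2 + (Sy/sg)^2) with ((Sx^2+Sy^2)/sg^2) by (field; lra). rewrite hsg2. field. lra. }
  exists (Sx/sg), (Sy/sg). split; [exact hu|].
  assert (eSx : Sx = sg * (Sx/sg)) by (field; lra).
  assert (eSy : Sy = sg * (Sy/sg)) by (field; lra).
  set (cc := Sx/sg) in *. set (ss := Sy/sg) in *. clearbody cc ss.
  rewrite eSx, eSy in i0x, i0y, i1x, i1y, i2x, i2y.
  destruct (coreT a Mx My sg cc ss ha hsg) as [r1 r2].
  - assumption.
  - fold k. rewrite i0x, i0y. nra.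
  - fold k. rewrite i1x, i1y. nra.
  - fold k. rewrite i2x, i2y. nra.
  - fold k in r1, r2. rewrite i0x in r1. rewrite i0y in r2. unfold Vp. f_equal; lra.
Qed.

Lemma s_side a p : (exists r, side_of a p r) -> side_of a p (Defs.s a p).
Proof. intro h. unfold Defs.s. apply epsilon_spec. exact h. Qed.

Lemma s_V a c s : 1 < a -> a <= sqrt 2 -> c^2 + s^2 = 1 -> Defs.s a (Vp a c s) = side a c s.
Proof.
  intros ha1 ha2 u. pose proof (V_side a c s ha1 u) as h.
  apply (uniq a (Vp a c s)); auto. apply V_onY; auto.
  apply s_side. eauto.
Qed.

Lemma s_spec a p : 1 < a -> a <= sqrt 2 -> onY a p ->
  exists c s, c^2 + s^2 = 1 /\ Vp a c s = p /\ Defs.s a p = side a c s.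
Proof.
  intros ha1 ha2 hp. destruct p as [x y].
  destruct (exist_tri a x y ha1 hp) as [r hr].
  assert (exists c s, c^2 + s^2 = 1 /\ Vp a c s = (x,y)).
  { destruct hr as [[qx qy] [[wx wy] [hq [hw [hr0 [d1 [d2 d3]]]]]]].
    destruct (orient x y qx qy wx wy r hr0 d1 d2 d3) as [[o1 o2]|[o1 o2]].
    - apply (T_oriented a x y qx qy wx wy); auto.
      destruct (Req_dec qx x); [|left; auto]. destruct (Req_dec qy y); [|right; auto].
      subst qx qy. exfalso. apply dist_sq in d1. cbn [fst snd] in d1. nra.
    - apply (T_oriented a x y wx wy qx qy); auto.
      destruct (Req_dec wx x); [|left; auto]. destruct (Req_dec wy y); [|right; auto].
      subst wx wy. exfalso. apply dist_sq in d3. cbn [fst snd] in d3. nra. }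
  destruct H as [c [s [u e]]]. exists c, s. split; [|split]; auto.
  rewrite <- e. apply s_V; auto.
Qed.

Lemma C3S3 c s : C3 c s ^2 + S3 c s ^2 = (c^2+s^2)^3.
Proof. unfold C3, S3. ring. Qed.

Lemma sqrt_sq_pos x : 0 <= x -> sqrt (x^2) = x.
Proof. apply sqrt_pow2. Qed.

Lemma kap_min a c s : 1 < a -> c^2+s^2 = 1 -> S3 c s = 0 -> kap a c s = 2/(a^2+3).
Proof.
  intros ha u h. assert (C3 c s ^2 = 1) by (pose proof (C3S3 c s) as E; rewrite u, h in E; lra).
  unfold kap, Dd. rewrite H, h.
  replace ((a ^ 2 - 1) ^ 2 / 4 * (1 + 0 ^ 2 / a ^ 2) + 2 * (a ^ 2 + 1)) with (((a^2+3)/2)^2) by (field; lra).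
  rewrite sqrt_sq_pos. field. nra. assert (0 < a^2) by nra. lra.
Qed.

Lemma kap_max a c s : 1 < a -> c^2+s^2 = 1 -> C3 c s = 0 -> kap a c s = 2*a/(3*a^2+1).
Proof.
  intros ha u h. assert (S3 c s ^2 = 1) by (pose proof (C3S3 c s) as E; rewrite u, h in E; lra).
  unfold kap, Dd. rewrite H, h.
  replace ((a ^ 2 - 1) ^ 2 / 4 * (0 ^ 2 + 1 / a ^ 2) + 2 * (a ^ 2 + 1)) with (((3*a^2+1)/(2*a))^2) by (field; lra).
  rewrite sqrt_sq_pos. field. split; nra. apply Rlt_le, Rdiv_lt_0_compat; nra.
Qed.

Lemma sq_cases x v : 0 <= v -> x^2 = v^2 -> x = v \/ x = -v.
Proof. intros h e. assert ((x-v)*(x+v) = 0) by nra. apply Rmult_integral in H. destruct H; [left|right]; lra. Qed.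

Ltac fr3 := change (sqrt 3) with r3; unfold Rdiv; ring_simplify; rewrite ?r3_6, ?r3_5, ?r3_4, ?r3_3, ?r3_2; field.

Lemma V_min a c s : 1 < a -> c^2+s^2 = 1 -> S3 c s = 0 -> min_vertex a (Vp a c s).
Proof.
  intros ha u h. unfold Vp. rewrite (kap_min a c s ha u h). unfold P1, P2. rewrite h.
  assert (a2 : a^2 + 3 <> 0) by nra. assert (a0 : a <> 0) by lra.
  unfold S3 in h. assert (h' : s * (3*c^2 - s^2) = 0) by (rewrite <- h; ring).
  apply Rmult_integral in h'. unfold min_vertex. destruct h' as [hs|hs].
  - subst s. assert (c^2 = 1^2) by lra. destruct (sq_cases c 1 ltac:(lra) H); subst c; unfold C3.
    + right; right; right; left. f_equal; field; auto.
    + left. f_equal; field; auto.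
  - assert (c^2 = (1/2)^2) by lra. assert (s^2 = (r3/2)^2) by (replace ((r3/2)^2) with (r3^2/4) by field; rewrite r3_2; lra).
    pose proof r3pos.
    destruct (sq_cases c (1/2) ltac:(lra) H); destruct (sq_cases s (r3/2) ltac:(lra) H0); subst c s; unfold C3.
    + right; left. f_equal; fr3; auto.
    + right; right; left. f_equal; fr3; auto.
    + right; right; right; right; left. f_equal; fr3; auto.
    + right; right; right; right; right. f_equal; fr3; auto.
Qed.

Lemma V_max a c s : 1 < a -> c^2+s^2 = 1 -> C3 c s = 0 -> max_vertex a (Vp a c s).
Proof.
  intros ha u h. unfold Vp. rewrite (kap_max a c s ha u h). unfold P1, P2. rewrite h.
  assert (a2 : 3*a^2 + 1 <> 0) by nra. assert (a0 : a <> 0) by lra.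
  unfold C3 in h. assert (h' : c * (c^2 - 3*s^2) = 0) by (rewrite <- h; ring).
  apply Rmult_integral in h'. unfold max_vertex. destruct h' as [hs|hs].
  - subst c. assert (s^2 = 1^2) by lra. destruct (sq_cases s 1 ltac:(lra) H); subst s; unfold S3.
    + left. f_equal; field; auto.
    + right; right; right; left. f_equal; field; auto.
  - assert (s^2 = (1/2)^2) by lra. assert (c^2 = (r3/2)^2) by (replace ((r3/2)^2) with (r3^2/4) by field; rewrite r3_2; lra).
    pose proof r3pos.
    destruct (sq_cases c (r3/2) ltac:(lra) H0); destruct (sq_cases s (1/2) ltac:(lra) H); subst c s; unfold S3.
    + right; right; right; right; right. f_equal; fr3; auto.
    + right; right; left. f_equal; fr3; auto.
    + right; right; right; right; left. f_equal; fr3; auto.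
    + right; left. f_equal; fr3; auto.
Qed.

Lemma min_V a p : 1 < a -> min_vertex a p -> exists c s, c^2+s^2 = 1 /\ S3 c s = 0 /\ Vp a c s = p.
Proof.
  intros ha hp. assert (a2 : a^2 + 3 <> 0) by nra. assert (a0 : a <> 0) by lra.
  assert (K : forall c s, c^2+s^2 = 1 -> S3 c s = 0 -> Vp a c s = (kap a c s * (a * P1 a c s), kap a c s * P2 a c s)) by auto.
  unfold min_vertex in hp.
  destruct hp as [e|[e|[e|[e|[e|e]]]]]; subst p.
  - exists (-1), 0. assert (u : (-1)^2 + 0^2 = 1) by ring. assert (h : S3 (-1) 0 = 0) by (unfold S3; ring).
    split; [|split]; auto. unfold Vp. rewrite (kap_min a _ _ ha u h). unfold P1, P2. rewrite h. unfold C3. f_equal; field; auto.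
  - exists (1/2), (r3/2). assert (u : (1/2)^2 + (r3/2)^2 = 1) by fr3. assert (h : S3 (1/2) (r3/2) = 0) by (unfold S3; fr3).
    split; [|split]; auto. unfold Vp. rewrite (kap_min a _ _ ha u h). unfold P1, P2. rewrite h. unfold C3. f_equal; fr3; auto.
  - exists (1/2), (-(r3/2)). assert (u : (1/2)^2 + (-(r3/2))^2 = 1) by fr3. assert (h : S3 (1/2) (-(r3/2)) = 0) by (unfold S3; fr3).
    split; [|split]; auto. unfold Vp. rewrite (kap_min a _ _ ha u h). unfold P1, P2. rewrite h. unfold C3. f_equal; fr3; auto.
  - exists 1, 0. assert (u : 1^2 + 0^2 = 1) by ring. assert (h : S3 1 0 = 0) by (unfold S3; ring).
    split; [|split]; auto. unfold Vp. rewrite (kap_min a _ _ ha u h). unfold P1, P2. rewrite h. unfold C3. f_equal; field; auto.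
  - exists (-(1/2)), (r3/2). assert (u : (-(1/2))^2 + (r3/2)^2 = 1) by fr3. assert (h : S3 (-(1/2)) (r3/2) = 0) by (unfold S3; fr3).
    split; [|split]; auto. unfold Vp. rewrite (kap_min a _ _ ha u h). unfold P1, P2. rewrite h. unfold C3. f_equal; fr3; auto.
  - exists (-(1/2)), (-(r3/2)). assert (u : (-(1/2))^2 + (-(r3/2))^2 = 1) by fr3. assert (h : S3 (-(1/2)) (-(r3/2)) = 0) by (unfold S3; fr3).
    split; [|split]; auto. unfold Vp. rewrite (kap_min a _ _ ha u h). unfold P1, P2. rewrite h. unfold C3. f_equal; fr3; auto.
Qed.

Lemma max_V a p : 1 < a -> max_vertex a p -> exists c s, c^2+s^2 = 1 /\ C3 c s = 0 /\ Vp a c s = p.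
Proof.
  intros ha hp. assert (a2 : 3*a^2 + 1 <> 0) by nra. assert (a0 : a <> 0) by lra.
  unfold max_vertex in hp.
  destruct hp as [e|[e|[e|[e|[e|e]]]]]; subst p.
  - exists 0, 1. assert (u : 0^2 + 1^2 = 1) by ring. assert (h : C3 0 1 = 0) by (unfold C3; ring).
    split; [|split]; auto. unfold Vp. rewrite (kap_max a _ _ ha u h). unfold P1, P2. rewrite h. unfold S3. f_equal; field; auto.
  - exists (-(r3/2)), (-(1/2)). assert (u : (-(r3/2))^2 + (-(1/2))^2 = 1) by fr3. assert (h : C3 (-(r3/2)) (-(1/2)) = 0) by (unfold C3; fr3).
    split; [|split]; auto. unfold Vp. rewrite (kap_max a _ _ ha u h). unfold P1, P2. rewrite h. unfold S3. f_equal; fr3; auto.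
  - exists (r3/2), (-(1/2)). assert (u : (r3/2)^2 + (-(1/2))^2 = 1) by fr3. assert (h : C3 (r3/2) (-(1/2)) = 0) by (unfold C3; fr3).
    split; [|split]; auto. unfold Vp. rewrite (kap_max a _ _ ha u h). unfold P1, P2. rewrite h. unfold S3. f_equal; fr3; auto.
  - exists 0, (-1). assert (u : 0^2 + (-1)^2 = 1) by ring. assert (h : C3 0 (-1) = 0) by (unfold C3; ring).
    split; [|split]; auto. unfold Vp. rewrite (kap_max a _ _ ha u h). unfold P1, P2. rewrite h. unfold S3. f_equal; field; auto.
  - exists (-(r3/2)), (1/2). assert (u : (-(r3/2))^2 + (1/2)^2 = 1) by fr3. assert (h : C3 (-(r3/2)) (1/2) = 0) by (unfold C3; fr3).
    split; [|split]; auto. unfold Vp. rewrite (kap_max a _ _ ha u h). unfold P1, P2. rewrite h. unfold S3. f_equal; fr3; auto.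
  - exists (r3/2), (1/2). assert (u : (r3/2)^2 + (1/2)^2 = 1) by fr3. assert (h : C3 (r3/2) (1/2) = 0) by (unfold C3; fr3).
    split; [|split]; auto. unfold Vp. rewrite (kap_max a _ _ ha u h). unfold P1, P2. rewrite h. unfold S3. f_equal; fr3; auto.
Qed.

Lemma Dd_S3 a c s : 1 < a -> c^2+s^2 = 1 -> Dd a c s = (a^2+3)^2/4 - (a^2-1)^3/(4*a^2) * S3 c s ^2.
Proof.
  intros ha u. assert (C3 c s ^2 = 1 - S3 c s ^2) by (pose proof (C3S3 c s) as E; rewrite u in E; lra).
  unfold Dd. rewrite H. field. lra.
Qed.

Lemma side_le a c s c' s' : 1 < a -> c^2+s^2 = 1 -> c'^2+s'^2 = 1 -> S3 c s ^2 <= S3 c' s' ^2 ->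
  side a c s <= side a c' s'.
Proof.
  intros ha u u' h. unfold side, kap.
  assert (Dd a c' s' <= Dd a c s).
  { rewrite !Dd_S3; auto. assert (0 < (a^2-1)^3/(4*a^2)). { apply Rdiv_lt_0_compat. apply pow_lt. nra. nra. }
    nra. }
  pose proof (Dd_pos a c' s' ha).
  assert (sqrt (Dd a c' s') <= sqrt (Dd a c s)) by (apply sqrt_le_1; lra).
  assert (0 < sqrt (Dd a c' s')) by (apply sqrt_lt_R0; auto).
  assert (/ sqrt (Dd a c s) <= / sqrt (Dd a c' s')) by (apply Rinv_le_contravar; auto).
  pose proof r3pos. assert (0 < 2*r3*a) by nra. nra.
Qed.

Lemma side_lt a c s c' s' : 1 < a -> c^2+s^2 = 1 -> c'^2+s'^2 = 1 -> S3 c s ^2 < S3 c' s' ^2 ->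
  side a c s < side a c' s'.
Proof.
  intros ha u u' h. unfold side, kap.
  assert (Dd a c' s' < Dd a c s).
  { rewrite !Dd_S3; auto. assert (0 < (a^2-1)^3/(4*a^2)). { apply Rdiv_lt_0_compat. apply pow_lt. nra. nra. }
    nra. }
  pose proof (Dd_pos a c' s' ha).
  assert (sqrt (Dd a c' s') < sqrt (Dd a c s)) by (apply sqrt_lt_1; lra).
  assert (0 < sqrt (Dd a c' s')) by (apply sqrt_lt_R0; auto).
  assert (/ sqrt (Dd a c s) < / sqrt (Dd a c' s')) by (apply Rinv_lt_contravar; nra).
  pose proof r3pos. assert (0 < 2*r3*a) by nra. nra.
Qed.

Lemma side_r1 a c s : 1 < a -> c^2+s^2 = 1 -> S3 c s = 0 -> side a c s = r1 a.
Proof. intros ha u h. unfold side, r1. rewrite (kap_min a c s ha u h). fold r3. field. nra. Qed.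

Lemma side_r2 a c s : 1 < a -> c^2+s^2 = 1 -> C3 c s = 0 -> side a c s = r2 a.
Proof. intros ha u h. unfold side, r2. rewrite (kap_max a c s ha u h). fold r3. field. nra. Qed.

Lemma side_range a c s : 1 < a -> c^2+s^2 = 1 -> r1 a <= side a c s <= r2 a.
Proof.
  intros ha u. split.
  - rewrite <- (side_r1 a 1 0 ha ltac:(ring) ltac:(unfold S3; ring)).
    apply side_le; auto. ring. unfold S3 at 1. replace (3 * 1 ^ 2 * 0 - 0 ^ 3) with 0 by ring. 
    replace (0^2) with 0 by ring. apply pow2_ge_0.
  - rewrite <- (side_r2 a 0 1 ha ltac:(ring) ltac:(unfold C3; ring)).
    apply side_le; auto. ring. 
    assert (S3 0 1 ^2 = 1) by (unfold S3; ring). rewrite H.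
    pose proof (C3S3 c s). rewrite u in H0. pose proof (pow2_ge_0 (C3 c s)). lra.
Qed.

Definition ec (c s h : R) := c*cos h - s*sin h.
Definition es (c s h : R) := s*cos h + c*sin h.

Lemma cont_eps f x : continuity_pt f x -> forall e, 0 < e -> exists d, 0 < d /\ forall y, Rabs (y - x) < d -> Rabs (f y - f x) < e.
Proof.
  intros hc e he. destruct (hc e he) as [d [hd H]]. exists d. split; auto. intros y hy.
  destruct (Req_dec y x) as [->|hne]. rewrite Rminus_diag, Rabs_R0; auto.
  apply H. split. unfold D_x, no_cond; auto. simpl. unfold R_dist. auto.
Qed.

Lemma cont_invsqrt f x : continuity_pt f x -> 0 < f x -> continuity_pt (fun h => / sqrt (f h)) x.
Proof.
  intros hc hp. change (fun h => / sqrt (f h)) with (/ (comp sqrt f))%F.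
  apply continuity_pt_inv. apply continuity_pt_comp; auto. apply continuity_pt_sqrt; lra.
  unfold comp. apply Rgt_not_eq, sqrt_lt_R0; auto.
Qed.

Lemma cont_mul f g x : continuity_pt f x -> continuity_pt g x -> continuity_pt (fun h => f h * g h) x.
Proof. intros. change (fun h => f h * g h) with (f * g)%F. apply continuity_pt_mult; auto. Qed.

Lemma cont_Dd a c s : continuity_pt (fun h => Dd a (ec c s h) (es c s h)) 0.
Proof. unfold Dd, C3, S3, ec, es. reg. Qed.

Lemma cont_kap a c s : 1 < a -> continuity_pt (fun h => kap a (ec c s h) (es c s h)) 0.
Proof. intro ha. unfold kap. apply (cont_invsqrt (fun h => Dd a (ec c s h) (es c s h))). apply cont_Dd. apply Dd_pos; auto. Qed.

Lemma cont_Fx a c s : 1 < a -> continuity_pt (fun h => fst (Vp a (ec c s h) (es c s h))) 0.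
Proof. intro ha. unfold Vp; cbn [fst]. apply cont_mul. apply cont_kap; auto. unfold P1, C3, ec, es. reg. Qed.

Lemma cont_Fy a c s : 1 < a -> continuity_pt (fun h => snd (Vp a (ec c s h) (es c s h))) 0.
Proof. intro ha. unfold Vp; cbn [snd]. apply cont_mul. apply cont_kap; auto. unfold P2, S3, ec, es. reg. Qed.

Lemma e0 c s : ec c s 0 = c /\ es c s 0 = s.
Proof. unfold ec, es. rewrite cos_0, sin_0. split; ring. Qed.

Lemma e_unit c s h : c^2+s^2 = 1 -> ec c s h ^2 + es c s h ^2 = 1.
Proof.
  intro u. pose proof (sin2_cos2 h) as E. unfold Rsqr in E.
  replace (ec c s h ^2 + es c s h ^2) with ((c^2+s^2)*(sin h * sin h + cos h * cos h)) by (unfold ec, es; ring).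
  rewrite u, E. ring.
Qed.

Lemma S3_rot c s h : S3 (ec c s h) (es c s h) = S3 c s * C3 (cos h) (sin h) + C3 c s * S3 (cos h) (sin h).
Proof. unfold S3, C3, ec, es. ring. Qed.

Lemma S3_h_pos h : 0 < h -> h < 1 -> 0 < S3 (cos h) (sin h).
Proof.
  intros h0 h1. pose proof PI2_3_2.
  assert (sp : 0 < sin h) by (apply sin_gt_0; lra).
  assert (cp : 1/2 < cos h).
  { rewrite <- cos_PI3. apply cos_decreasing_1; lra. }
  pose proof (sin2_cos2 h) as E. unfold Rsqr in E.
  replace (S3 (cos h) (sin h)) with (sin h * (4 * cos h ^2 - 1)) by (unfold S3; nra).
  apply Rmult_lt_0_compat; nra.
Qed.

Lemma S3_neg h : S3 (cos (-h)) (sin (-h)) = - S3 (cos h) (sin h).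
Proof. rewrite cos_neg, sin_neg. unfold S3. ring. Qed.
Lemma C3_neg h : C3 (cos (-h)) (sin (-h)) = C3 (cos h) (sin h).
Proof. rewrite cos_neg, sin_neg. unfold C3. ring. Qed.

Lemma Delta_id c s h : S3 (ec c s h) (es c s h) ^2 - S3 c s ^2 =
  S3 (cos h) (sin h) * ((C3 c s ^2 - S3 c s ^2) * S3 (cos h) (sin h) + 2 * S3 c s * C3 c s * C3 (cos h) (sin h)).
Proof.
  rewrite S3_rot.
  assert (E : C3 (cos h) (sin h) ^2 + S3 (cos h) (sin h) ^2 = 1).
  { rewrite C3S3. pose proof (sin2_cos2 h) as E. unfold Rsqr in E. replace (cos h ^2 + sin h ^2) with 1 by nra. ring. }
  replace (S3 c s ^2) with (S3 c s ^2 * (C3 (cos h) (sin h) ^2 + S3 (cos h) (sin h) ^2)) at 1 by (rewrite E; ring).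
  ring.
Qed.

Lemma cont_G c s : continuity_pt (fun h => (C3 c s ^2 - S3 c s ^2) * S3 (cos h) (sin h) + 2 * S3 c s * C3 c s * C3 (cos h) (sin h)) 0.
Proof. unfold S3 at 2, C3 at 3. reg. Qed.

Lemma dist_small px py qx qy e : 0 < e -> Rabs (qx - px) < e/2 -> Rabs (qy - py) < e/2 ->
  Defs.dist (px,py) (qx,qy) < e.
Proof.
  intros he h1 h2. unfold Defs.dist; cbn [fst snd].
  rewrite <- (sqrt_pow2 e) by lra. apply sqrt_lt_1.
  apply Rplus_le_le_0_compat; apply pow2_ge_0. apply pow2_ge_0.
  assert ((px-qx)^2 = Rabs (qx - px) ^2) by (rewrite pow2_abs; ring).
  assert ((py-qy)^2 = Rabs (qy - py) ^2) by (rewrite pow2_abs; ring).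
  pose proof (Rabs_pos (qx-px)). pose proof (Rabs_pos (qy-py)).
  rewrite H, H0. nra.
Qed.

Lemma local_move a c s eps : 1 < a -> a <= sqrt 2 -> c^2+s^2 = 1 -> C3 c s * S3 c s <> 0 -> 0 < eps ->
  (exists q, onY a q /\ Defs.dist (Vp a c s) q < eps /\ Defs.s a q < Defs.s a (Vp a c s)) /\
  (exists q, onY a q /\ Defs.dist (Vp a c s) q < eps /\ Defs.s a (Vp a c s) < Defs.s a q).
Proof.
  intros ha1 ha2 u hcs he.
  destruct (e0 c s) as [ec0 es0].
  destruct (cont_eps _ _ (cont_Fx a c s ha1) (eps/2) ltac:(lra)) as [d1 [hd1 D1]].
  destruct (cont_eps _ _ (cont_Fy a c s ha1) (eps/2) ltac:(lra)) as [d2 [hd2 D2]].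
  set (G0 := 2 * S3 c s * C3 c s).
  assert (hG0 : G0 <> 0) by (unfold G0; intro; apply hcs; nra).
  destruct (cont_eps _ _ (cont_G c s) (Rabs G0) ltac:(apply Rabs_pos_lt; auto)) as [d3 [hd3 D3]].
  cbv beta in D1, D2, D3. rewrite ec0, es0 in D1, D2. rewrite cos_0, sin_0 in D3.
  replace ((C3 c s ^ 2 - S3 c s ^ 2) * S3 1 0 + 2 * S3 c s * C3 c s * C3 1 0) with G0 in D3 by (unfold G0, S3, C3; ring).
  set (h0 := Rmin (Rmin d1 d2) (Rmin d3 1) / 2).
  assert (hh0 : 0 < h0) by (unfold h0; assert (0 < Rmin (Rmin d1 d2) (Rmin d3 1)) by (repeat apply Rmin_glb_lt; lra); lra).
  assert (hh1 : h0 < 1) by (unfold h0; pose proof (Rmin_r d3 1); pose proof (Rmin_r (Rmin d1 d2) (Rmin d3 1)); lra).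
  assert (hd : forall h, Rabs h = h0 -> Rabs h < d1 /\ Rabs h < d2 /\ Rabs h < d3).
  { intros h e. rewrite e. unfold h0.
    pose proof (Rmin_l d1 d2). pose proof (Rmin_r d1 d2). pose proof (Rmin_l d3 1).
    pose proof (Rmin_l (Rmin d1 d2) (Rmin d3 1)). pose proof (Rmin_r (Rmin d1 d2) (Rmin d3 1)). lra. }
  assert (Q : forall h, Rabs h = h0 ->
     onY a (Vp a (ec c s h) (es c s h)) /\ Defs.dist (Vp a c s) (Vp a (ec c s h) (es c s h)) < eps /\
     Defs.s a (Vp a (ec c s h) (es c s h)) = side a (ec c s h) (es c s h) /\
     (0 < G0 -> 0 < (C3 c s ^2 - S3 c s ^2) * S3 (cos h) (sin h) + 2 * S3 c s * C3 c s * C3 (cos h) (sin h)) /\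
     (G0 < 0 -> (C3 c s ^2 - S3 c s ^2) * S3 (cos h) (sin h) + 2 * S3 c s * C3 c s * C3 (cos h) (sin h) < 0)).
  { intros h eh. destruct (hd h eh) as [k1 [k2 k3]].
    pose proof (e_unit c s h u) as uh.
    split; [apply V_onY; auto|split; [|split; [apply s_V; auto|]]].
    - specialize (D1 h ltac:(rewrite Rminus_0_r; auto)). specialize (D2 h ltac:(rewrite Rminus_0_r; auto)).
      destruct (Vp a c s) as [px py] eqn:Ep. destruct (Vp a (ec c s h) (es c s h)) as [qx qy] eqn:Eq.
      cbn [fst snd] in D1, D2. apply dist_small; auto.
    - specialize (D3 h ltac:(rewrite Rminus_0_r; auto)).
      apply Rabs_def2 in D3. destruct D3 as [D3a D3b].
      split; intro hg; [rewrite Rabs_right in D3a, D3b by lra; lra | rewrite Rabs_left in D3a, D3b by lra; lra]. }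
  pose proof (S3_h_pos h0 hh0 hh1) as Sp.
  assert (ep : Rabs h0 = h0) by (apply Rabs_right; lra).
  assert (em : Rabs (-h0) = h0) by (rewrite Rabs_Ropp; auto).
  destruct (Q h0 ep) as [qy1 [qd1 [qs1 [qg1 qg1']]]].
  destruct (Q (-h0) em) as [qy2 [qd2 [qs2 [qg2 qg2']]]].
  rewrite S3_neg, C3_neg in qg2, qg2'.
  pose proof (Delta_id c s h0) as Dp. pose proof (Delta_id c s (-h0)) as Dm.
  rewrite S3_neg, C3_neg in Dm.
  pose proof (e_unit c s h0 u) as u1. pose proof (e_unit c s (-h0) u) as u2.
  rewrite (s_V a c s ha1 ha2 u).
  destruct (Rlt_or_le 0 G0) as [gp|gn].
  - specialize (qg1 gp). specialize (qg2 gp).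
    split.
    + exists (Vp a (ec c s (-h0)) (es c s (-h0))). split; [|split]; auto. rewrite qs2.
      apply side_lt; auto. nra.
    + exists (Vp a (ec c s h0) (es c s h0)). split; [|split]; auto. rewrite qs1.
      apply side_lt; auto. nra.
  - assert (gn' : G0 < 0) by lra. specialize (qg1' gn'). specialize (qg2' gn').
    split.
    + exists (Vp a (ec c s h0) (es c s h0)). split; [|split]; auto. rewrite qs1.
      apply side_lt; auto. nra.
    + exists (Vp a (ec c s (-h0)) (es c s (-h0))). split; [|split]; auto. rewrite qs2.
      apply side_lt; auto. nra.
Qed.

Theorem mainTheorem18 (a : R) (ha1 : 1 < a) (ha2 : a <= sqrt 2) :
  (forall p, min_vertex a p ->
     onY a p /\ s a p = r1 a /\ is_global_min a p) /\
  (forall p, max_vertex a p ->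
     onY a p /\ s a p = r2 a /\ is_global_max a p) /\
  (forall p, onY a p -> (is_local_min a p \/ is_local_max a p) ->
     min_vertex a p \/ max_vertex a p).
Proof.
  split; [|split].
  - intros p hp. destruct (min_V a p ha1 hp) as [c [s0 [u [h e]]]]. subst p.
    assert (hs : Defs.s a (Vp a c s0) = r1 a) by (rewrite s_V; auto; apply side_r1; auto).
    split; [apply V_onY; auto|split; auto].
    intros q hq. destruct (s_spec a q ha1 ha2 hq) as [c' [s' [u' [_ e']]]].
    rewrite hs, e'. apply side_range; auto.
  - intros p hp. destruct (max_V a p ha1 hp) as [c [s0 [u [h e]]]]. subst p.
    assert (hs : Defs.s a (Vp a c s0) = r2 a) by (rewrite s_V; auto; apply side_r2; auto).
    split; [apply V_onY; auto|split; auto].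
    intros q hq. destruct (s_spec a q ha1 ha2 hq) as [c' [s' [u' [_ e']]]].
    rewrite hs, e'. apply side_range; auto.
  - intros p hp hl. destruct (s_spec a p ha1 ha2 hp) as [c [s0 [u [e _]]]]. subst p.
    destruct (Req_dec (C3 c s0 * S3 c s0) 0) as [z|nz].
    + apply Rmult_integral in z. destruct z as [z|z].
      * right. apply V_max; auto.
      * left. apply V_min; auto.
    + exfalso. destruct hl as [[eps [he H]]|[eps [he H]]].
      * destruct (local_move a c s0 eps ha1 ha2 u nz he) as [[q [q1 [q2 q3]]] _].
        specialize (H q q1 q2). lra.
      * destruct (local_move a c s0 eps ha1 ha2 u nz he) as [_ [q [q1 [q2 q3]]]].
        specialize (H q q1 q2). lra.
Qed.
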